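(* Let $R$ be a power-serieswise Armendariz ring. Then the power series ring $R[[x]]$ is a generalized right Baer ring if and only if $R$ is a generalized right Baer ring.
   Context: All rings are associative with identity. For a nonempty subset $X$ of a ring $R$, $r_R(X)=\{a\in R : xa=0 \text{ for all } x\in X\}$, and for a positive integer $n$, $X^n$ denotes the set of all products $a_1\cdots a_n$ with $a_i\in X$. A ring $R$ is generalized right Baer if for every nonempty subset $X$ of $R$ there exist a positive integer $n$ (depending on $X$) and an idempotent $e\in R$ with $r_R(X^n)=eR$. A ring $R$ is power-serieswise Armendariz if whenever $f(x)=\sum_{i\ge0}a_ix^i$ and $g(x)=\sum_{j\ge0}b_jx^j$ in $R[[x]]$ satisfy $f(x)g(x)=0$, then $a_ib_j=0$ for all $i,j$. *)

(* Defs.v *)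
From HB Require Import structures.
From mathcomp Require Import all_boot all_order all_algebra.
Set Implicit Arguments. Unset Strict Implicit. Unset Printing Implicit Defensive.
Import GRing.Theory.
Local Open Scope ring_scope.

(* Generic notions for a ring given by its carrier, multiplication and zero.
   (Used both for R and for the power series ring R[[x]].) *)
Section Generic.
Variables (T : Type) (mul : T -> T -> T) (zero : T).

(* X^n for n = k.+1: products a_1 * ... * a_{k+1} with every a_i in X *)
Fixpoint setpow (X : T -> Prop) (k : nat) : T -> Prop :=
  match k with
  | 0 => X
  | k'.+1 => fun a => exists b c, X b /\ setpow X k' c /\ a = mul b c
  end.

Definition r_ann (X : T -> Prop) : T -> Prop :=
  fun a => forall x, X x -> mul x a = zero.

Definition gen_right_Baer : Prop :=
  forall X : T -> Prop, (exists x, X x) ->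
    exists (k : nat) (e : T), mul e e = e /\
      (forall a, r_ann (setpow X k) a <-> exists b, a = mul e b).
End Generic.

Definition pseries (R : nzRingType) := nat -> R.

Definition ps_mul (R : nzRingType) (f g : pseries R) : pseries R :=
  fun n => \sum_(i < n.+1) f i * g (n - i)%N.

Definition ps_zero (R : nzRingType) : pseries R := fun _ => 0.

Definition power_serieswise_Armendariz (R : nzRingType) : Prop :=
  forall f g : pseries R, ps_mul f g = ps_zero R ->
    forall i j : nat, f i * g j = 0.

(* Main.v *)
Require Import Defs.
From mathcomp Require Import all_boot all_order all_algebra.
From Stdlib Require Import FunctionalExtensionality.
Set Implicit Arguments. Unset Strict Implicit.
Import GRing.Theory.
Local Open Scope ring_scope.

Section PS.
Variable R : nzRingType.
Implicit Types f g h : pseries R.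

Definition trunc (n : nat) f : {poly R} := \poly_(i < n.+1) f i.

Lemma coef_trunc_mul {n m} f g : (m <= n)%N ->
  ps_mul f g m = (trunc n f * trunc n g)`_m.
Proof.
move=> hm; rewrite coefM /ps_mul; apply: eq_bigr => i _.
rewrite !coef_poly; have hi := ltn_ord i.
rewrite ifT; last by apply: leq_ltn_trans (leq_trans _ hm) _; rewrite // -ltnS.
by rewrite ifT // ltnS (leq_trans (leq_subr _ _) hm).
Qed.

Lemma ps_mulA f g h : ps_mul f (ps_mul g h) = ps_mul (ps_mul f g) h.
Proof.
apply: functional_extensionality_dep => n.
have -> : ps_mul f (ps_mul g h) n = (trunc n f * (trunc n g * trunc n h))`_n.
  rewrite coefM /ps_mul; apply: eq_bigr => i _.
  rewrite coef_poly ifT // -(coef_trunc_mul g h (leq_subr i n)) //.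
have -> : ps_mul (ps_mul f g) h n = ((trunc n f * trunc n g) * trunc n h)`_n.
  rewrite coefM /ps_mul; apply: eq_bigr => i _.
  rewrite [X in _ = _ * X]coef_poly ifT; last by rewrite ltnS leq_subr.
  by rewrite -(coef_trunc_mul f g (ltnSE (ltn_ord i))).
by rewrite mulrA.
Qed.

Definition scale (c : R) f : pseries R := fun n => c * f n.
Definition cst (a : R) : pseries R := fun n => if n == 0%N then a else 0.

Lemma scale_mul c f g : scale c (ps_mul f g) = ps_mul (scale c f) g.
Proof.
apply: functional_extensionality_dep => n; rewrite /scale /ps_mul mulr_sumr.
by apply: eq_bigr => i _; rewrite mulrA.
Qed.

Lemma scale1 f : scale 1 f = f.
Proof. by apply: functional_extensionality_dep => n; rewrite /scale mul1r. Qed.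

Lemma cst_mul a g : ps_mul (cst a) g = scale a g.
Proof.
apply: functional_extensionality_dep => n; rewrite /ps_mul big_ord_recl /= subn0.
rewrite big1 ?addr0 // => i _; by rewrite /cst /= mul0r.
Qed.

Lemma ps_mul0 f g : ps_mul f g 0%N = f 0%N * g 0%N.
Proof. by rewrite /ps_mul big_ord1. Qed.

Hypothesis PSA : power_serieswise_Armendariz R.

Section Ann.
Variables (X : pseries R -> Prop) (Y : R -> Prop).

Lemma Lann (hY : forall y, Y y -> exists f i, X f /\ f i = y) k :
  forall c g, (forall Q, setpow (@ps_mul R) X k Q -> scale c (ps_mul Q g) = ps_zero R) ->
  forall z, setpow (@GRing.mul R) Y k z -> forall j, c * z * g j = 0.
Proof.
elim: k => [|k IH] c g H z /=.
  move=> /hY [f [i [Xf <-]]] j.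
  have := H f Xf; rewrite scale_mul => /PSA /(_ i j); by rewrite /scale.
move=> [y [z' [Yy [Yz' ->]]]] j; rewrite mulrA.
apply: (IH _ _ _ _ Yz'); move=> Q' XQ'.
move: Yy => /hY [f [i [Xf <-]]].
have := H (ps_mul f Q') (ex_intro _ f (ex_intro _ Q' (conj Xf (conj XQ' erefl)))).
rewrite -ps_mulA scale_mul => /PSA Hz.
by apply: functional_extensionality_dep => m; rewrite /scale Hz.
Qed.

Lemma Lann2 (hX : forall f, X f -> forall i, Y (f i) \/ f i = 0) k :
  forall c g, (forall z, setpow (@GRing.mul R) Y k z -> forall j, c * z * g j = 0) ->
  forall Q, setpow (@ps_mul R) X k Q -> scale c (ps_mul Q g) = ps_zero R.
Proof.
elim: k => [|k IH] c g H Q /=.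
  move=> XQ; rewrite scale_mul; apply: functional_extensionality_dep => n.
  rewrite /ps_mul big1 // => i _; rewrite /scale.
  by case: (hX Q XQ i) => [Yq|->]; [apply: H|rewrite mulr0 mul0r].
move=> [f [Q' [Xf [XQ' ->]]]].
rewrite -ps_mulA scale_mul; apply: functional_extensionality_dep => n.
rewrite /ps_mul big1 // => i _.
have := IH (c * f i) g _ Q' XQ' => /(_ _) /(congr1 (fun s => s (n - i)%N)).
rewrite /scale => -> //.
move=> z' Yz' j; case: (hX f Xf i) => [Yf|->]; last by rewrite mulr0 !mul0r.
rewrite -[c * f i * z']mulrA; apply: H.
by exists (f i), z'.
Qed.
End Ann.
End PS.

Theorem corollary3p10 (R : nzRingType) :
  power_serieswise_Armendariz R ->
  (gen_right_Baer (@ps_mul R) (ps_zero R) <-> gen_right_Baer (@GRing.mul R) 0%R).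
Proof.
move=> PSA; split.
- move=> HB Y [y0 Yy0].
  pose X := fun f : pseries R => exists y, Y y /\ f = cst y.
  have [k [E [EE heq]]] := HB X (ex_intro _ (cst y0) (ex_intro _ y0 (conj Yy0 erefl))).
  have hY : forall y, Y y -> exists f i, X f /\ f i = y.
    by move=> y Yy; exists (cst y), 0%N; split => //; exists y.
  have hX : forall f, X f -> forall i, Y (f i) \/ f i = 0.
    move=> f [y [Yy ->]] i; rewrite /cst; case: (i == 0%N); by [left|right].
  exists k, (E 0%N); split.
    by rewrite -[in RHS]EE ps_mul0.
  move=> a; split.
  + move=> Ha.
    have : r_ann (@ps_mul R) (ps_zero R) (setpow (@ps_mul R) X k) (cst a).
      move=> Q XQ; rewrite -(scale1 (ps_mul Q _)).
      apply: (Lann2 hX) XQ => z Yz j; rewrite mul1r /cst.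
      by case: (j == 0%N); [apply: Ha|rewrite mulr0].
    move=> /heq [B HB']; exists (B 0%N).
    by have := congr1 (fun s => s 0%N) HB'; rewrite ps_mul0 /cst.
  + move=> [b ->] z Yz.
    have : r_ann (@ps_mul R) (ps_zero R) (setpow (@ps_mul R) X k) E.
      by apply/heq; exists E.
    move=> HE.
    have := Lann PSA hY (c := 1) (g := E) _ Yz 0%N.
    rewrite mul1r mulrA => -> ; first by rewrite mul0r.
    by move=> Q XQ; rewrite scale1; apply: HE.
- move=> HB X [f0 Xf0].
  pose Y := fun y => exists f i, X f /\ f i = y.
  have [k [e [ee heq]]] := HB Y (ex_intro _ (f0 0%N) (ex_intro _ f0 (ex_intro _ 0%N (conj Xf0 erefl)))).
  have hX : forall f, X f -> forall i, Y (f i) \/ f i = 0.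
    by move=> f Xf i; left; exists f, i.
  have hY : forall y, Y y -> exists f i, X f /\ f i = y by [].
  exists k, (cst e); split.
    rewrite cst_mul; apply: functional_extensionality_dep => n.
    by rewrite /scale /cst; case: (n == 0%N); rewrite ?ee ?mulr0.
  move=> a; split.
  + move=> Ha; exists a; rewrite cst_mul.
    apply: functional_extensionality_dep => j; rewrite /scale.
    have : r_ann (@GRing.mul R) 0 (setpow (@GRing.mul R) Y k) (a j).
      move=> z Yz; rewrite -(mul1r z).
      apply: (Lann PSA hY (c := 1) (g := a) _ Yz) => Q XQ.
      by rewrite scale1; apply: Ha.
    by move=> /heq [b ->]; rewrite mulrA ee.
  + move=> [b ->] Q XQ; rewrite -(scale1 (ps_mul Q _)).
    apply: (Lann2 hX) XQ => z Yz j; rewrite mul1r cst_mul /scale.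
    have : exists b', e * b j = e * b' by exists (b j).
    by move=> /heq; apply.
Qed.
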